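(* Let $\Gamma$ be a $q$-connected finite simple graph on $n$ vertices ($q\ge1$). Then $\zeta_\alpha(\Gamma)=0$ for every composition $\alpha=(a_1,\dots,a_k)\models n$ such that $a_j>1$ for some $j>k-q$. In particular, if $\Gamma$ is connected then $\zeta_\alpha(\Gamma)=0$ whenever the last part of $\alpha$ exceeds $1$.
   Context: A graph is $q$-connected if it has more than $q$ vertices and remains connected after deleting any set of fewer than $q$ vertices. For a coloring $\lambda:V\to\mathbb{N}$ of a finite simple graph $\Gamma$ with values $i_1<\dots<i_k$, let $I_j=\lambda^{-1}(\{i_1,\dots,i_j\})$, $I_0=\emptyset$. It is ordered if for each $j$, no two distinct vertices $u,w$ with $\lambda(u)=\lambda(w)=i_j$ are joined by a path in $\Gamma$ (possibly a single edge) all of whose internal vertices lie in $I_{j-1}$. Its type is $(|\lambda^{-1}(i_1)|,\dots,|\lambda^{-1}(i_k)|)$. For a composition $\alpha$ of $n$ with $k(\alpha)$ parts, $\zeta_\alpha(\Gamma)$ is the number of surjective ordered colorings $\lambda:V\to\{1,\dots,k(\alpha)\}$ of type $\alpha$. *)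

(* Defs.v *)
From HB Require Import structures.
From mathcomp Require Import all_boot.
From Stdlib Require Import ClassicalEpsilon.
Set Implicit Arguments. Unset Strict Implicit. Unset Printing Implicit Defensive.

Definition simple_graph (T : finType) (e : rel T) : Prop :=
  symmetric e /\ irreflexive e.

Definition del_rel (T : finType) (e : rel T) (S : {set T}) : rel T :=
  [rel x y | [&& e x y, x \notin S & y \notin S]].

Definition q_connected (T : finType) (e : rel T) (q : nat) : Prop :=
  q < #|T| /\
  forall S : {set T}, #|S| < q ->
    forall u w, u \notin S -> w \notin S -> connect (del_rel e S) u w.

Definition connected_graph (T : finType) (e : rel T) : Prop :=
  forall u w, connect e u w.

Definition path_via (T : finType) (e : rel T) (u w : T) (p : seq T) : bool :=
  path e u (rcons p w).

Definition ordered_coloring (T : finType) (e : rel T) (lam : T -> nat) : Prop :=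
  forall u w, u != w -> lam u = lam w ->
    ~ (exists p : seq T, path_via e u w p && all (fun x => lam x < lam u) p).

Definition orderedb (T : finType) (e : rel T) (lam : T -> nat) : bool :=
  if excluded_middle_informative (ordered_coloring e lam) then true else false.

Definition composition (n : nat) (alpha : seq nat) : bool :=
  all (fun a => 0 < a) alpha && (sumn alpha == n).

(* Colourings V -> {1,...,k} are encoded as l : {ffun T -> 'I_k}, vertex x
   having colour (val (l x)).+1. *)
Definition colour (T : finType) (k : nat) (l : {ffun T -> 'I_k}) (x : T) : nat :=
  (val (l x)).+1.

Definition zeta (T : finType) (e : rel T) (alpha : seq nat) : nat :=
  #|[set l : {ffun T -> 'I_(size alpha)} |
      [&& [forall i, exists x, l x == i] ,
          orderedb e (colour l)
        & [forall i : 'I_(size alpha), #|[set x | l x == i]| == nth 0 alpha i]]]|.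

(* Main.v *)
Require Import Defs.
From mathcomp Require Import all_boot.
From mathcomp Require Import zify.
From Stdlib Require Import ClassicalEpsilon.
Set Implicit Arguments. Unset Strict Implicit.

Section Aux.
Variable T : finType.

Lemma path_all (r : rel T) (P : pred T) x p :
  path r x p -> (forall a b, r a b -> P b) -> all P p.
Proof.
elim: p x => //= a p IH x /andP[rxa pa] H.
by rewrite (H _ _ rxa) (IH a pa H).
Qed.

Lemma path_restr (e : rel T) (P : pred T) x p :
  path e x p -> all P (x :: p) -> path [rel a b | [&& e a b, P a & P b]] x p.
Proof.
elim: p x => //= a p IH x /andP[exa pa] /and3P[Px Pa Pp].
by rewrite exa Px Pa /= IH //= Pa.
Qed.

Lemma walk_contra (e : rel T) (lam : T -> nat) (Ho : ordered_coloring e lam) d y :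
  forall p x, path e x (rcons p y) -> all (fun v => lam v <= d) p ->
  lam x = d -> lam y = d -> x != y -> False.
Proof.
move=> p; elim: {p}(size p) {-2}p (leqnn (size p)) => [|n IH] p Hs x Hp Hall Hx Hy Hxy.
  move: Hs; rewrite leqn0 => /nilP Hp0; subst p.
  apply: (Ho x y Hxy); first by rewrite Hx Hy.
  by exists [::]; rewrite /path_via Hp.
case Hh: (has (fun v => d <= lam v) p).
  case: (split_find Hh) Hs Hp Hall => v s1 s2 Hv Hn Hs Hp Hall.
  move: Hp; rewrite -cats1 -catA cats1 cat_path last_rcons => /andP[Hp1 Hp2].
  have Hvd : lam v = d.
    apply/eqP; rewrite eqn_leq Hv andbT.
    by move: Hall; rewrite all_cat all_rcons => /andP[/andP[]].
  have Hs1 : all (fun v => lam v < d) s1.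
    apply/allP => z zs; rewrite ltnNge; apply/negP => H.
    by move/hasP: Hn; apply; exists z.
  case: (eqVneq x v) => [Exv|Nxv].
    subst v; apply: (IH s2) Hp2 _ Hx Hy Hxy.
      by move: Hs; rewrite size_cat size_rcons; lia.
    by move: Hall; rewrite all_cat => /andP[].
  apply: (Ho x v Nxv); first by rewrite Hx Hvd.
  by exists s1; rewrite /path_via Hp1 /= Hx.
apply: (Ho x y Hxy); first by rewrite Hx Hy.
exists p; rewrite /path_via Hp Hx /=.
apply/allP => z zp; rewrite ltnNge; apply/negP => H.
by move/negbT/hasPn: Hh => /(_ z zp); rewrite H.
Qed.

Lemma seqmax_ge (f : T -> nat) s : all (fun v => f v <= foldr maxn 0 (map f s)) s.
Proof.
elim: s => //= a s IH; rewrite leq_maxl /=.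
apply: sub_all IH => z /= H; exact: leq_trans H (leq_maxr _ _).
Qed.

Lemma seqmax_in (f : T -> nat) x s :
  exists2 z, z \in x :: s & f z = foldr maxn 0 (map f (x :: s)).
Proof.
elim: s x => [|a s IH] x /=; first by exists x; rewrite ?inE ?maxn0.
case: (IH a) => z zin Hz.
case: (leqP (f x) (f a)) => H.
- exists z; first by rewrite inE zin orbT.
  by rewrite Hz /= maxnA (maxn_idPr H).
- case: (leqP (f x) (maxn (f a) (foldr maxn 0 [seq f i | i <- s]))) => H2.
  + exists z; first by rewrite inE zin orbT.
    by rewrite Hz.
  + exists x; first by rewrite inE eqxx.
    by [].
Qed.

End Aux.

Lemma card_above k j : j < k -> #|[set i : 'I_k | j < i]| <= k - j.+1.
Proof.
move=> jk.
have H := cardsC [set i : 'I_k | j < i]; rewrite card_ord in H.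
have H1 : #|[set widen_ord jk i | i : 'I_j.+1]| = j.+1.
  rewrite card_imset ?card_ord //; move=> a b /(congr1 val) /= ab; exact: val_inj.
have H2 : #|[set widen_ord jk i | i : 'I_j.+1]| <= #|~: [set i : 'I_k | j < i]|.
  apply: subset_leq_card; apply/subsetP => x /imsetP[i _ ->].
  by rewrite !inE /= -leqNgt -ltnS ltn_ord.
lia.
Qed.

Lemma core (T : finType) (e : rel T) (q k : nat) (l : {ffun T -> 'I_k}) (J : 'I_k) :
  symmetric e -> ordered_coloring e (colour l) ->
  (forall S : {set T}, #|S| < q ->
    forall u w, u \notin S -> w \notin S -> connect (del_rel e S) u w) ->
  k - q < J.+1 -> 1 < #|[set x | l x == J]| -> False.
Proof.
move=> esym Ho Hq HJ /card_gt1P[u [w [uJ wJ uw]]].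
move: uJ wJ; rewrite !inE => /eqP uJ /eqP wJ.
set lam := colour l.
have lu : lam u = J.+1 by rewrite /lam /colour uJ.
have lw : lam w = J.+1 by rewrite /lam /colour wJ.
pose r m := [rel a b | [&& e a b, (fun v => lam v <= m) a & (fun v => lam v <= m) b]].
have rsym m : symmetric (r m).
  by move=> a b /=; rewrite esym; case: (lam a <= m); case: (lam b <= m); rewrite ?andbF ?andbT.
have rpath m x y : connect (r m) x y -> x != y -> lam x = m -> lam y = m -> False.
  case/connectP => p Hp Hy Nxy Hx Hyl.
  case/lastP: p Hp Hy => [|p' z] Hp Hy; first by rewrite Hy eqxx in Nxy.
  rewrite last_rcons in Hy; subst y.
  apply: (@walk_contra T e lam Ho m z p' x) => //.
    by apply: (sub_path _ Hp) => a b /= /andP[].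
  have := @path_all _ (r m) (fun v => lam v <= m) _ _ Hp.
  rewrite all_rcons => H; case/andP: (H (fun a b => fun h => let: And3 _ _ h3 := and3P h in h3)) => //.
pose S := [set z | (J.+1 < lam z) && connect (r (lam z)) u z].
have injS : {in S &, injective l}.
  move=> z1 z2; rewrite !inE => /andP[_ c1] /andP[_ c2] lz.
  have lz' : lam z1 = lam z2 by rewrite /lam /colour lz.
  apply/eqP/negPn/negP => N.
  apply: (rpath (lam z1) z1 z2) => //.
  apply: (@connect_trans _ _ u); first by rewrite (sym_connect_sym (rsym _)).
  by rewrite lz'.
have cS : #|S| < q.
  rewrite -(card_in_imset injS).
  have : #|l @: S| <= #|[set i : 'I_k | J < i]|.
    apply: subset_leq_card; apply/subsetP => i /imsetP[z]; rewrite !inE => /andP[H _] ->.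
    by move: H; rewrite /lam /colour ltnS.
  have := card_above (ltn_ord J).
  have := ltn_ord J; move: HJ; set a := #|_|; set b := #|_|; move: a b => a b; lia.
have uS : u \notin S by rewrite inE lu ltnn.
have wS : w \notin S by rewrite inE lw ltnn.
case/connectP: (Hq S cS u w uS wS) => p Hp Ew.
have Hpe : path e u p by apply: (sub_path _ Hp) => a b /= /andP[].
have HpS : all (fun v => v \notin S) p.
  by apply: (path_all Hp) => a b /= /and3P[].
pose m := foldr maxn 0 (map lam (u :: p)).
have Hall := seqmax_ge lam (u :: p).
case: (seqmax_in lam u p) => z zin Hz.
case: (leqP m J.+1) => Hm.
  apply: (rpath J.+1 u w) => //.
  apply/connectP; exists p => //.
  apply: path_restr => //.
  apply: sub_all Hall => v /= H; exact: leq_trans H Hm.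
have zu : z != u by apply/eqP => E; move: Hm; rewrite /m -Hz E lu ltnn.
move: zin; rewrite inE (negPf zu) /= => zp.
have Hpm : path (r m) u p by apply: path_restr.
case/splitPr: zp Hpm HpS => p1 p2 Hpm HpS.
have : z \in S.
  rewrite inE Hz -/m Hm /=.
  apply/connectP; exists (rcons p1 z); last by rewrite last_rcons.
  move: Hpm; rewrite cat_path => /andP[H1 /= /andP[H2 _]].
  by rewrite rcons_path H1.
by move: HpS; rewrite all_cat /= => /and3P[_ /negPf ->].
Qed.

Theorem mainTheorem11 (T : finType) (e : rel T) (q : nat) :
  simple_graph e -> 1 <= q -> q_connected e q ->
  (forall alpha : seq nat, composition #|T| alpha ->
     (exists j : nat, [/\ j < size alpha, size alpha - q < j.+1 & 1 < nth 0 alpha j]) ->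
     zeta e alpha = 0)
  /\
  (connected_graph e ->
   forall alpha : seq nat, composition #|T| alpha ->
     1 < last 0 alpha -> zeta e alpha = 0).
Proof.
move=> [esym _] q1 [_ Hq].
have P1 : forall alpha : seq nat, composition #|T| alpha ->
     (exists j : nat, [/\ j < size alpha, size alpha - q < j.+1 & 1 < nth 0 alpha j]) ->
     zeta e alpha = 0.
  move=> alpha _ [j [Hj HJ Hn]].
  apply/eqP; rewrite cards_eq0; apply/eqP/setP => l; rewrite !inE.
  apply/negbTE/negP => /and3P[_ Ho Hcard].
  move: Ho; rewrite /orderedb; case: excluded_middle_informative => // Ho _.
  apply: (@core T e q _ l (Ordinal Hj) esym Ho Hq) => //=.
  by rewrite (eqP (forallP Hcard (Ordinal Hj))).
split => // _ alpha Hc Hl; apply: P1 => //.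
have Hs : 0 < size alpha by move: Hl; case: (alpha).
exists (size alpha).-1; split.
- by rewrite prednK.
- by rewrite prednK //; lia.
- by rewrite nth_last.
Qed.
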